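(* Let $n\ge5$, let $B=\mathrm{Sym}(n)$ with $+$ denoting composition of permutations, and let $c=(1\,2)$. Define $\lambda_a=\mathrm{id}$ for $a\in\mathrm{Alt}(n)$ and $\lambda_a(b)=c+b-c$ for $a\notin\mathrm{Alt}(n)$, and $a\circ b=a+\lambda_a(b)$. Then $(B,+,\circ)$ is a skew left brace, the set $X$ of all transpositions in $\mathrm{Sym}(n)$ satisfies $r_B(X\times X)=X\times X$, and $(X,r_B|_{X\times X})$ is a simple non-degenerate solution of the Yang--Baxter equation of cardinality $n(n-1)/2$.
   Context: A skew left brace is a triple $(B,+,\circ)$ with $(B,+)$ and $(B,\circ)$ groups and $a\circ(b+c)=a\circ b-a+a\circ c$; then $\lambda_a(b)=-a+a\circ b$, and $a^{-1}$ denotes the $\circ$-inverse. The associated solution is $r_B(a,b)=(\lambda_a(b),\lambda_a(b)^{-1}\circ a\circ b)$. A set-theoretic solution $(X,r)$: $r$ satisfies $(r\times\mathrm{id})(\mathrm{id}\times r)(r\times\mathrm{id})=(\mathrm{id}\times r)(r\times\mathrm{id})(\mathrm{id}\times r)$; writing $r(x,y)=(\lambda_x(y),\rho_y(x))$, non-degenerate means $r$ and all $\lambda_x,\rho_y$ are bijective. A morphism $f\colon(X,r)\to(Y,s)$ is a map with $(f\times f)r=s(f\times f)$; $(X,r)$ with $|X|>1$ is simple if every surjective morphism $(X,r)\to(Y,s)$ is bijective or has $|Y|=1$. *)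

(* Defs.v *)
From HB Require Import structures.
From mathcomp Require Import all_boot all_order all_fingroup all_solvable.
Set Implicit Arguments. Unset Strict Implicit. Unset Printing Implicit Defensive.

Definition is_group_law (T : Type) (op : T -> T -> T) : Prop :=
  associative op /\
  exists e : T, (forall x, op e x = x /\ op x e = x) /\
                (forall x, exists y, op x y = e /\ op y x = e).

Definition is_skew_left_brace (T : Type) (add : T -> T -> T) (opp : T -> T)
    (circ : T -> T -> T) : Prop :=
  [/\ associative add,
      exists e : T, (forall x, add e x = x /\ add x e = x) /\
                    (forall x, add x (opp x) = e /\ add (opp x) x = e),
      is_group_law circ &
      forall a b c, circ a (add b c) = add (add (circ a b) (opp a)) (circ a c)].

Definition circ_unit (T : finType) (circ : T -> T -> T) (d : T) : T :=
  odflt d [pick e | [forall x, (circ e x == x) && (circ x e == x)]].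
Definition circ_inv (T : finType) (circ : T -> T -> T) (x : T) : T :=
  odflt x [pick y | (circ x y == circ_unit circ x) && (circ y x == circ_unit circ x)].

Definition brace_lambda (T : Type) (add : T -> T -> T) (opp : T -> T)
    (circ : T -> T -> T) (a b : T) : T := add (opp a) (circ a b).

Definition brace_sol (T : finType) (add : T -> T -> T) (opp : T -> T)
    (circ : T -> T -> T) (p : T * T) : T * T :=
  let l := brace_lambda add opp circ p.1 p.2 in
  (l, circ (circ (circ_inv circ l) p.1) p.2).

Definition r12 (X : Type) (r : X * X -> X * X) (t : X * X * X) : X * X * X :=
  let: (x, y, z) := t in let: (u, v) := r (x, y) in (u, v, z).
Definition r23 (X : Type) (r : X * X -> X * X) (t : X * X * X) : X * X * X :=
  let: (x, y, z) := t in let: (u, v) := r (y, z) in (x, u, v).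

Definition is_solution (X : Type) (r : X * X -> X * X) : Prop :=
  forall t, r12 r (r23 r (r12 r t)) = r23 r (r12 r (r23 r t)).

Definition non_degenerate (X : Type) (r : X * X -> X * X) : Prop :=
  [/\ bijective r,
      forall x, bijective (fun y => (r (x, y)).1) &
      forall y, bijective (fun x => (r (x, y)).2)].

Definition sol_morphism (X Y : Type) (r : X * X -> X * X) (s : Y * Y -> Y * Y)
    (f : X -> Y) : Prop :=
  forall p : X * X, s (f p.1, f p.2) = (f (r p).1, f (r p).2).

Definition simple_solution (X : Type) (r : X * X -> X * X) : Prop :=
  (exists x y : X, x <> y) /\
  forall (Y : Type) (s : Y * Y -> Y * Y) (f : X -> Y),
    is_solution s -> sol_morphism r s f ->
    (forall y : Y, exists x, f x = y) ->
    bijective f \/ (forall y1 y2 : Y, y1 = y2).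

(* "+" on Sym(n) is composition of permutations: (a + b)(x) = a (b x). *)
Definition padd (n : nat) (a b : 'S_n) : 'S_n := (b * a)%g.
Definition popp (n : nat) (a : 'S_n) : 'S_n := (a^-1)%g.

(* c = (1 2), i.e. the transposition of the first two points of 'I_n *)
Definition c12 (n : nat) : 'S_n :=
  match (insub 0 : option 'I_n), (insub 1 : option 'I_n) with
  | Some i, Some j => tperm i j
  | _, _ => 1%g
  end.

Definition lam17 (n : nat) (a b : 'S_n) : 'S_n :=
  if a \in Alt 'I_n then b else padd (padd (c12 n) b) (popp (c12 n)).

Definition circ17 (n : nat) (a b : 'S_n) : 'S_n := padd a (lam17 a b).

Definition rB17 (n : nat) : 'S_n * 'S_n -> 'S_n * 'S_n :=
  brace_sol (@padd n) (@popp n) (@circ17 n).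

Definition transpositions (n : nat) : {set 'S_n} :=
  [set t : 'S_n | [exists i : 'I_n, exists j : 'I_n, (i != j) && (t == tperm i j)]].

Definition Xtype (n : nat) := {t : 'S_n | t \in transpositions n}.

(* restriction of r_B to X x X (well defined once r_B(X x X) = X x X) *)
Definition rX17 (n : nat) (p : Xtype n * Xtype n) : Xtype n * Xtype n :=
  let q := rB17 (val p.1, val p.2) in (insubd p.1 q.1, insubd p.2 q.2).

(* Main.v *)
Require Import Defs.
From mathcomp Require Import all_boot all_order all_fingroup all_solvable.
From Stdlib Require Import Classical ClassicalEpsilon.
Set Implicit Arguments. Unset Strict Implicit. Unset Printing Implicit Defensive.
Local Open Scope group_scope.

Section S.
Variable n : nat.
Hypothesis hn : 5 <= n.

Definition i0 : 'I_n := Ordinal (leq_trans (isT : 0 < 5) hn).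
Definition i1 : 'I_n := Ordinal (leq_trans (isT : 1 < 5) hn).

Lemma c12E : c12 n = tperm i0 i1.
Proof.
rewrite /c12; case: insubP => [i _ Hi|]; last by rewrite /= (leq_trans _ hn).
case: insubP => [j _ Hj|]; last by rewrite /= (leq_trans _ hn).
by congr tperm; apply: val_inj.
Qed.

Lemma i01 : i0 != i1. Proof. by []. Qed.

Lemma cc : c12 n * c12 n = 1. Proof. by rewrite c12E tperm2. Qed.
Lemma cV : (c12 n)^-1 = c12 n. Proof. by rewrite -[LHS]mul1g -cc mulgK. Qed.
Lemma c_odd : odd_perm (c12 n). Proof. by rewrite c12E odd_tperm. Qed.

Lemma lamE (a b : 'S_n) : lam17 a b = if odd_perm a then b ^ c12 n else b.
Proof.
by rewrite /lam17 Alt_even /padd /popp; case: (odd_perm a) => //=; rewrite conjgE mulgA.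
Qed.
Notation c := (c12 n).
Lemma conj_cc x : (x ^ c) ^ c = x.
Proof. by rewrite -conjgM cc conjg1. Qed.

Lemma lam_odd (a b : 'S_n) : odd_perm (lam17 a b) = odd_perm b.
Proof. by rewrite lamE; case: (odd_perm a); rewrite ?odd_permJ. Qed.
Lemma lamM (a x y : 'S_n) : lam17 a (x * y) = lam17 a x * lam17 a y.
Proof. by rewrite !lamE; case: (odd_perm a); rewrite ?conjMg. Qed.
Lemma lamK (a x : 'S_n) : lam17 a (lam17 a x) = x.
Proof. by rewrite !lamE; case: (odd_perm a); rewrite ?conj_cc. Qed.
Lemma lamV (a x : 'S_n) : lam17 a x^-1 = (lam17 a x)^-1.
Proof. by rewrite !lamE; case: (odd_perm a); rewrite ?conjVg. Qed.
Lemma lam1 (a : 'S_n) : lam17 a 1 = 1.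
Proof. by rewrite !lamE; case: (odd_perm a); rewrite ?conj1g. Qed.
Lemma circE (a b : 'S_n) : circ17 a b = lam17 a b * a. Proof. by []. Qed.
Lemma circ_odd (a b : 'S_n) : odd_perm (circ17 a b) = odd_perm a (+) odd_perm b.
Proof. by rewrite circE odd_permM lam_odd addbC. Qed.
Lemma lam_circ (a b d : 'S_n) : lam17 (circ17 a b) d = lam17 a (lam17 b d).
Proof.
rewrite !lamE circ_odd; case: (odd_perm a); case: (odd_perm b) => //=.
by rewrite conj_cc.
Qed.

Lemma brace : is_skew_left_brace (@padd n) (@popp n) (@circ17 n).
Proof.
split.
- by move=> a b d; rewrite /padd mulgA.
- exists 1; split=> x; rewrite /padd /popp; [by rewrite mulg1 mul1g | by rewrite mulgV mulVg].
- split.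
  + move=> a b d; rewrite !circE lam_circ lamM mulgA; by [].
  + exists 1; split=> x.
    * by rewrite !circE lam1 mul1g lamE /= odd_perm1 mulg1.
    * exists (lam17 x x^-1); rewrite !circE lamK mulVg; split=> //.
      have -> : lam17 (lam17 x x^-1) x = lam17 x x.
        by rewrite !lamE; case: (boolP (odd_perm x)) => H; rewrite ?odd_permJ odd_permV ?H /= ?(negbTE H).
      by rewrite -lamM mulgV lam1.
- move=> a b d; rewrite /padd /popp !circE lamM.
  by rewrite !mulgA mulgK.
Qed.
Notation T := (transpositions n).
Lemma memT t : reflect (exists i j, i != j /\ t = tperm i j) (t \in T).
Proof.
rewrite inE; apply: (iffP existsP) => [[i /existsP[j /andP[Hij /eqP ->]]]|[i [j [Hij ->]]]].
  by exists i, j.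
by exists i; apply/existsP; exists j; rewrite Hij eqxx.
Qed.
Lemma tpermT (i j : 'I_n) : i != j -> tperm i j \in T.
Proof. by move=> H; apply/memT; exists i, j. Qed.
Lemma trJ t g : t \in T -> t ^ g \in T.
Proof.
move=> /memT[i [j [Hij ->]]]; rewrite tpermJ; apply: tpermT.
by rewrite (inj_eq perm_inj).
Qed.
Lemma tr_odd t : t \in T -> odd_perm t.
Proof. by move=> /memT[i [j [Hij ->]]]; rewrite odd_tperm. Qed.
Lemma tr2 t : t \in T -> t * t = 1.
Proof. by move=> /memT[i [j [Hij ->]]]; rewrite tperm2. Qed.
Lemma trV t : t \in T -> t^-1 = t.
Proof. by move=> Ht; rewrite -[LHS]mul1g -(tr2 Ht) mulgK. Qed.
Lemma cT : c \in T. Proof. by rewrite c12E tpermT. Qed.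

Lemma unitE (d : 'S_n) : circ_unit (@circ17 n) d = 1.
Proof.
rewrite /circ_unit; case: pickP => [e /forallP /(_ 1) /andP[/eqP H _]|H] /=.
  by move: H; rewrite circE lam1 mul1g.
have := H 1; move/negbT/negP; case; apply/forallP => x.
by rewrite !circE lam1 mul1g lamE odd_perm1 mulg1 !eqxx.
Qed.

Lemma invE b : b \in T -> circ_inv (@circ17 n) (b ^ c) = b.
Proof.
move=> Hb; have Hl : odd_perm (b ^ c) by rewrite odd_permJ tr_odd.
rewrite /circ_inv unitE; case: pickP => [y /andP[/eqP H _]|H] /=.
  move: H; rewrite circE lamE Hl => /(canRL (mulgK _)); rewrite mul1g.
  by rewrite -conjVg trV // => /conjg_inj.
have := H b; move/negbT/negP; case; rewrite !circE !lamE Hl tr_odd //.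
by rewrite -conjMg tr2 // conj1g conj_cc tr2 // eqxx.
Qed.

Lemma rB17E a b : a \in T -> b \in T -> rB17 (a, b) = (b ^ c, a ^ (c * b)).
Proof.
move=> Ha Hb; rewrite /rB17 /brace_sol /brace_lambda /=.
have El : padd (popp a) (circ17 a b) = b ^ c.
  by rewrite /padd /popp circE lamE tr_odd // mulgK.
rewrite El invE //; congr pair.
rewrite !circE !lamE (tr_odd Hb) /= odd_permM odd_permJ !tr_odd //=.
by rewrite conjgM [in RHS]conjgE trV // mulgA.
Qed.
Notation X := (Xtype n).
Definition conjX (x : X) (g : 'S_n) : X := exist _ (val x ^ g) (trJ g (valP x)).
Lemma rX17E (x y : X) : rX17 (x, y) = (conjX y c, conjX x (c * val y)).
Proof.
rewrite /rX17 -/(rB17 (val x, val y)) rB17E ?(valP x) ?(valP y) //=.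
by congr pair; apply: val_inj; rewrite /= insubdK //; apply: trJ; apply: valP.
Qed.
Lemma conjXE (x : X) g : val (conjX x g) = val x ^ g. Proof. by []. Qed.
Lemma ccK (g : 'S_n) : g * c * c = g. Proof. by rewrite -mulgA cc mulg1. Qed.
Lemma uuK (g : 'S_n) (x : X) : g * val x * val x = g.
Proof. by rewrite -mulgA tr2 ?mulg1 //; apply: valP. Qed.
Lemma uu (x : X) : val x * val x = 1.
Proof. by rewrite tr2 //; apply: valP. Qed.
Lemma conj_c (x : X) : val x ^ c = c * val x * c.
Proof. by rewrite conjgE cV mulgA. Qed.
Lemma invX (x : X) : (val x)^-1 = val x. Proof. by rewrite trV //; apply: valP. Qed.

Lemma ttK (g u : 'S_n) : u \in T -> g * u * u = g.
Proof. by move=> Hu; rewrite -mulgA tr2 ?mulg1. Qed.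

Lemma rB_inv (u v : 'S_n) : u \in T -> v \in T -> rB17 (v ^ (c * u), u ^ c) = (u, v).
Proof.
move=> Hu Hv; rewrite rB17E ?trJ // conj_cc; congr pair.
rewrite -conjgM.
have -> : c * u * (c * u ^ c) = 1.
  by rewrite conjgE cV !mulgA ccK (ttK _ Hu) cc.
by rewrite conjg1.
Qed.

Lemma img : [set rB17 p | p in setX T T] = setX T T.
Proof.
apply/setP => -[u v]; apply/imsetP/setXP => [[[a b] /setXP[Ha Hb]]|[Hu Hv]].
  by rewrite rB17E // => -[-> ->]; split; apply: trJ.
exists (v ^ (c * u), u ^ c); first by apply/setXP; split; apply: trJ.
by rewrite rB_inv.
Qed.

Lemma r12E (A : Type) (r : A * A -> A * A) x y z :
  Defs.r12 r (x, y, z) = ((r (x, y)).1, (r (x, y)).2, z).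
Proof. by rewrite /Defs.r12; case: (r (x, y)). Qed.
Lemma r23E (A : Type) (r : A * A -> A * A) x y z :
  Defs.r23 r (x, y, z) = (x, (r (y, z)).1, (r (y, z)).2).
Proof. by rewrite /Defs.r23; case: (r (y, z)). Qed.
Lemma sol : is_solution (@rX17 n).
Proof.
move=> [[x y] z]; rewrite !(r12E, r23E, rX17E) /=.
congr (_, _, _); apply: val_inj; rewrite /= -!conjgM; congr (_ ^ _);
  rewrite !conj_c ?conjgE ?invMg ?invX ?cV !mulgA ?cc ?mul1g ?ccK ?uuK ?ccK ?uuK ?uu ?mul1g //.
Qed.
Definition ginv (p : X * X) : X * X := (conjX p.2 (c * val p.1), conjX p.1 c).

Lemma nondeg : non_degenerate (@rX17 n).
Proof.
split.
- exists ginv.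
  + move=> [x y]; rewrite rX17E /ginv /=; congr pair; apply: val_inj;
      rewrite /= -?conjgM ?conj_cc //.
    by rewrite conj_c !mulgA (ccK (c * val y)) (uuK c y) cc conjg1.
  + by rewrite cc conjg1.
  + move=> [u v]; rewrite /ginv rX17E /=; congr pair; apply: val_inj;
      rewrite /= -?conjgM ?conj_cc //.
    by rewrite cc conjg1.
  + by rewrite (conj_c u) !mulgA (ccK (c * val u)) (uuK c u) cc conjg1.
- move=> x; exists (fun y => conjX y c) => y; rewrite rX17E /=; apply: val_inj;
    by rewrite /= -conjgM cc conjg1.
- move=> y; exists (fun x => conjX x (c * val y)^-1) => x; rewrite rX17E /=;
    apply: val_inj; by rewrite /= ?conjgK ?conjgKV.
Qed.
Definition supp (t : 'S_n) : {set 'I_n} := [set i | t i != i].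
Lemma supp_tperm (i j : 'I_n) : i != j -> supp (tperm i j) = [set i; j].
Proof.
move=> Hij; apply/setP => k; rewrite !inE.
case: tpermP => [->|->|H1 H2].
- by rewrite eq_sym Hij eqxx.
- by rewrite Hij eqxx orbT.
- rewrite eqxx; apply/esym/norP; split; rewrite eq_sym; apply/eqP => /esym; [exact: H1 | exact: H2].


Qed.

Lemma cardT : #|T| = n * (n - 1) %/ 2.
Proof.
have inj : {in T &, injective supp}.
  move=> s t /memT[i [j [Hij ->]]] /memT[k [l [Hkl ->]]].
  rewrite !supp_tperm // => E.
  have Hk : k \in [set i; j] by rewrite E !inE eqxx.
  have Hl : l \in [set i; j] by rewrite E !inE eqxx orbT.
  have Hi : i \in [set k; l] by rewrite -E !inE eqxx.
  move: Hk Hl Hkl; rewrite !inE => /orP[]/eqP-> /orP[]/eqP->.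
  - by rewrite eqxx.
  - by [].
  - by rewrite tpermC.
  - by rewrite eqxx.
rewrite -(card_in_imset inj).
have -> : supp @: T = [set A : {set 'I_n} | #|A| == 2].
  apply/setP => A; rewrite inE; apply/imsetP/cards2P.
    move=> [t /memT[i [j [Hij ->]]] ->]; exists i, j; split=> //.
    by rewrite supp_tperm.
  move=> [i [j [Hij ->]]]; exists (tperm i j); first exact: tpermT.
  by rewrite supp_tperm.
by rewrite card_draws card_ord bin2 -divn2 subn1.
Qed.
Section Simple.
Variables (Y : Type) (s : Y * Y -> Y * Y) (f : X -> Y).
Hypothesis hm : sol_morphism (@rX17 n) s f.

Lemma hmE (x y : X) : s (f x, f y) = (f (conjX y c), f (conjX x (c * val y))).
Proof. by move: (hm (x, y)); rewrite rX17E. Qed.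
Lemma f_conj_c (x x' : X) : f x = f x' -> f (conjX x c) = f (conjX x' c).
Proof.
move=> E; have H1 := congr1 fst (hmE x x); have H2 := congr1 fst (hmE x x').
rewrite -E in H2; exact: (etrans (esym H1) H2).
Qed.
Lemma f_conj_cy (x x' y : X) : f x = f x' -> f (conjX x (c * val y)) = f (conjX x' (c * val y)).
Proof.
move=> E; have H1 := congr1 snd (hmE x y); have H2 := congr1 snd (hmE x' y).
rewrite -E in H2; exact: (etrans (esym H1) H2).
Qed.
Lemma conjX_cc (x : X) g : conjX (conjX x c) (c * g) = conjX x g.
Proof. by apply: val_inj; rewrite /= -conjgM mulgA cc mul1g. Qed.
Lemma f_conj (x x' t : X) : f x = f x' -> f (conjX x (val t)) = f (conjX x' (val t)).
Proof. by move=> E; rewrite -(conjX_cc x) -(conjX_cc x'); apply: f_conj_cy; apply: f_conj_c. Qed.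

Variable x0 : X.
Definition F (t : 'S_n) : Y := f (insubd x0 t).
Lemma fF (x : X) : f x = F (val x). Proof. by rewrite /F valKd. Qed.
Lemma FJ (a a' t : 'S_n) : a \in T -> a' \in T -> t \in T -> F a = F a' -> F (a ^ t) = F (a' ^ t).
Proof.
move=> Ha Ha' Ht E.
have K b : b \in T -> insubd x0 (b ^ t) = conjX (insubd x0 b) (val (insubd x0 t)).
  by move=> Hb; apply: val_inj; rewrite /= !insubdK ?trJ.
by rewrite /F !K //; apply: f_conj.
Qed.

Definition Q (a b d : 'I_n) := F (tperm a b) = F (tperm a d).

Lemma QJ a b d (u v : 'I_n) : a != b -> a != d -> u != v -> Q a b d ->
  Q (tperm u v a) (tperm u v b) (tperm u v d).
Proof.
move=> Hab Had Huv; rewrite /Q -!tpermJ; apply: FJ; exact: tpermT.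
Qed.
Definition QD a b d := [&& a != b, a != d & b != d] /\ Q a b d.

Lemma QDJ a b d (u v : 'I_n) : QD a b d -> QD (tperm u v a) (tperm u v b) (tperm u v d).
Proof.
move=> [/and3P[Hab Had Hbd] HQ]; split; first by rewrite !(inj_eq perm_inj) Hab Had Hbd.
have [<-|Huv] := eqVneq u v; first by rewrite tperm1 !perm1.
exact: QJ.
Qed.

Lemma QD_all a b d : QD a b d -> forall p q r, [&& p != q, p != r & q != r] -> Q p q r.
Proof.
move=> H p q r /and3P[Hpq Hpr Hqr].
have := QDJ a p H; rewrite tpermL.
move: (tperm a p b) (tperm a p d) => b1 d1 H1.
have [/and3P[Hb1 _ _] _] := H1.
have := QDJ b1 q H1; rewrite tpermL tpermD 1?eq_sym //.
move: (tperm b1 q d1) => d2 H2.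
have [/and3P[_ Hd2p Hd2q] _] := H2.
have := QDJ d2 r H2; rewrite tpermL !tpermD; first (by case); by rewrite eq_sym.
Qed.
Lemma fresh (l : seq 'I_n) : size l < n -> exists m, m \notin l.
Proof.
move=> Hl; case: (pickP (fun m => m \notin l)) => [m Hm|H]; first by exists m.
suff : n <= size l by rewrite leqNgt Hl.
rewrite -{1}(card_ord n); apply: leq_trans (card_size l); apply: subset_leq_card.
by apply/subsetP => m _; move: (H m) => /negbFE.
Qed.

Lemma all_eq a b d : QD a b d -> forall p q r w, p != q -> r != w ->
  F (tperm p q) = F (tperm r w).
Proof.
move=> H p q r w Hpq Hrw.
have [m Hm] : exists m, m \notin [:: p; q; r; w] by apply: fresh; apply: leq_trans hn.
move: Hm; rewrite !inE !negb_or => /and4P[Hmp Hmq Hmr Hmw].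
have E1 : F (tperm p q) = F (tperm p m).
  by apply: (QD_all H); rewrite Hpq eq_sym Hmp eq_sym Hmq.
have [Epr|Hpr] := eqVneq p r.
  subst r.
  rewrite E1; apply: (QD_all H); by rewrite (eq_sym p m) Hmp Hrw Hmw.
rewrite E1 tpermC.
have E2 : F (tperm m p) = F (tperm m r) by apply: (QD_all H); rewrite Hmp Hmr Hpr.
rewrite E2 tpermC; apply: (QD_all H); by rewrite (eq_sym r m) Hmr Hrw Hmw.
Qed.
Lemma gen i j k l : i != j -> k != l -> tperm i j != tperm k l ->
  F (tperm i j) = F (tperm k l) -> exists a b d, QD a b d.
Proof.
move=> Hij Hkl Hne E.
have [Eki|Hki] := eqVneq k i.
  subst k; exists i, j, l; split=> //; rewrite Hij Hkl /=.
  by apply: contraNneq Hne => ->.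
have [Ekj|Hkj] := eqVneq k j.
  subst k; exists j, i, l; split; last by rewrite /Q tpermC.
  rewrite eq_sym Hij Hkl /=; apply: contraNneq Hne => <-; by rewrite tpermC.
have [Eli|Hli] := eqVneq l i.
  subst l; exists i, j, k; split; last by rewrite /Q E tpermC.
  rewrite Hij eq_sym Hki /=; apply: contraNneq Hne => <-; by rewrite tpermC.
have [Elj|Hlj] := eqVneq l j.
  subst l; exists j, i, k; split; last by rewrite /Q tpermC E tpermC.
  rewrite eq_sym Hij eq_sym Hkj /=; apply: contraNneq Hne => <-; by [].
have [m Hm] : exists m, m \notin [:: i; j; k; l] by apply: fresh; apply: leq_trans hn.
move: Hm; rewrite !inE !negb_or => /and4P[Hmi Hmj Hmk Hml].
have Hlm : l != m by rewrite eq_sym.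
have E2 := FJ (tpermT Hij) (tpermT Hkl) (tpermT Hlm) E.
have Hlk : l != k by rewrite eq_sym.
rewrite !tpermJ (tpermL l m) (tpermD Hli Hmi) (tpermD Hlj Hmj) (tpermD Hlk Hmk) in E2.
exists k, l, m; split; first by rewrite Hkl Hlm eq_sym Hmk.
by rewrite /Q -E E2.
Qed.
End Simple.
Definition i2 : 'I_n := Ordinal (leq_trans (isT : 2 < 5) hn).

Lemma simple : simple_solution (@rX17 n).
Proof.
split.
  have H02 : i0 != i2 by [].
  exists (exist _ (tperm i0 i1) (tpermT i01)), (exist _ (tperm i0 i2) (tpermT H02)).
  move=> /(congr1 (fun x : X => val x i0)) /=; rewrite !tpermL => /(congr1 val).
  by [].
move=> Y s f _ hm surj.
case: (classic (exists x x', x <> x' /\ f x = f x')) => [[x [x' [Hne E]]]|Hinj].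
  right.
  case/memT: (valP x) => i [j [Hij Ex]].
  case/memT: (valP x') => k [l [Hkl Ex']].
  rewrite !(fF f x) Ex Ex' in E.
  have Hne' : tperm i j != tperm k l.
    by apply/eqP => H; apply: Hne; apply: val_inj; rewrite Ex Ex' H.
  have [a [b [d HQ]]] := gen hm Hij Hkl Hne' E.
  move=> y1 y2; have [x1 <-] := surj y1; have [x2 <-] := surj y2.
  case/memT: (valP x1) => p [q [Hpq E1]].
  case/memT: (valP x2) => r [w [Hrw E2]].
  rewrite !(fF f x) E1 E2; exact: (all_eq hm HQ).
left.
have inj : injective f.
  move=> x x' E; apply: NNPP => Hne; apply: Hinj; by exists x, x'.
exists (fun y => proj1_sig (constructive_indefinite_description _ (surj y))).
  by move=> x; apply: inj; exact: (proj2_sig (constructive_indefinite_description _ (surj (f x)))).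
by move=> y; exact: (proj2_sig (constructive_indefinite_description _ (surj y))).
Qed.
End S.

Theorem mainTheorem17 (n : nat) (hn : 5 <= n) :
  is_skew_left_brace (@padd n) (@popp n) (@circ17 n) /\
  [set rB17 p | p in setX (transpositions n) (transpositions n)]
    = setX (transpositions n) (transpositions n) /\
  is_solution (@rX17 n) /\
  non_degenerate (@rX17 n) /\
  simple_solution (@rX17 n) /\
  #|transpositions n| = n * (n - 1) %/ 2.
Proof.
split; first exact: brace hn.
split; first exact: img hn.
split; first exact: sol hn.
split; first exact: nondeg hn.
split; first exact: simple hn.
exact: cardT.
Qed.
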